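(* Let $\mathbb U=(\mathbb U_{lk})_{l,k=3}^{N_1-1}$ with $$\mathbb U_{lk}=\frac{1}{1+p_0}\int_0^{L}\tilde s\,\tilde\Theta_l'(\tilde s)\,\tilde\Theta_k(\tilde s)\,d\tilde s,$$ and let $\mathbb D=\mathrm{diag}(\beta_3^2,\beta_4^2,\dots,\beta_{N_1-1}^2)$. Then $\|\mathbb U^T\|_{\ell^2_*}\lesssim\|\mathbb D^{1/2}\|_{\ell^2_*}$, where $\|\cdot\|_{\ell^2_*}$ is the operator norm on $\ell^2$ and the implied constant is independent of $N_1$.
   Context: Fix $R_0>0$, an integer $N_1\ge4$ and $p_0>-1/2$; let $L=2\pi R_0(1+p_0)$. Let $\Theta_0=(2\pi R_0)^{-1/2}$ and, for $k\ge1$, $\Theta_{2k-1}(s)=(2\pi R_0)^{-1/2}\cos(ks/R_0)$, $\Theta_{2k}(s)=(2\pi R_0)^{-1/2}\sin(ks/R_0)$, with $\beta_0=0$, $\beta_{2k-1}=\beta_{2k}=k$. Define $\tilde\Theta_k(\tilde s)=\Theta_k(2\pi R_0\tilde s/L)$ for $\tilde s\in[0,L]$ (so $\int_0^L\tilde\Theta_j\tilde\Theta_k\,d\tilde s=(1+p_0)\delta_{jk}$), and primes denote $d/d\tilde s$. *)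

(* Defs.v *)
From Stdlib Require Import Reals Lra Lia.
From Coquelicot Require Import Coquelicot.
Open Scope R_scope.

Definition beta (k : nat) : nat := Nat.div (S k) 2.

Definition Theta (R0 : R) (k : nat) (s : R) : R :=
  match k with
  | O => / sqrt (2 * PI * R0)
  | _ => if Nat.odd k
         then / sqrt (2 * PI * R0) * cos (INR (beta k) * s / R0)
         else / sqrt (2 * PI * R0) * sin (INR (beta k) * s / R0)
  end.

Definition Lc (R0 p0 : R) : R := 2 * PI * R0 * (1 + p0).

Definition Thetat (R0 p0 : R) (k : nat) (st : R) : R :=
  Theta R0 k (2 * PI * R0 * st / Lc R0 p0).

Definition Umat (R0 p0 : R) (l k : nat) : R :=
  / (1 + p0) *
  RInt (fun st => st * Derive (Thetat R0 p0 l) st * Thetat R0 p0 k st) 0 (Lc R0 p0).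

Definition UTmat (R0 p0 : R) (i j : nat) : R := Umat R0 p0 j i.

Definition Dhalf (i j : nat) : R := if Nat.eqb i j then INR (beta i) else 0.

(* Matrices/vectors are indexed by 3 .. N1-1; entries outside are ignored. *)
Definition vnorm (N1 : nat) (x : nat -> R) : R :=
  sqrt (sum_n_m (fun i => x i ^ 2) 3 (N1 - 1)).

Definition matvec (N1 : nat) (A : nat -> nat -> R) (x : nat -> R) : nat -> R :=
  fun i => sum_n_m (fun j => A i j * x j) 3 (N1 - 1).

Definition opnorm (N1 : nat) (A : nat -> nat -> R) : Rbar :=
  Lub_Rbar (fun r => exists x : nat -> R,
                       vnorm N1 x <= 1 /\ r = vnorm N1 (matvec N1 A x)).

(* Main.v *)
Require Import Defs.
From Stdlib Require Import Reals.
From Coquelicot Require Import Coquelicot.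
From Stdlib Require Import Lra Lia Arith Bool.
Open Scope R_scope.

Lemma sum_ind_gen (P : nat -> nat -> Prop) :
  (forall m n, (n < m)%nat -> P m n) ->
  (forall m, P m m) ->
  (forall m n, (m <= S n)%nat -> P m n -> P m (S n)) ->
  forall m n, P m n.
Proof.
  intros H0 H1 H2 m n. induction n.
  - destruct m. apply H1. apply H0; lia.
  - destruct (le_lt_dec m (S n)). apply H2; auto. apply H0; lia.
Qed.

Lemma sum_mult_r' (u : nat -> R) a m n :
  sum_n_m (fun k => u k * a) m n = sum_n_m u m n * a.
Proof. exact (sum_n_m_mult_r a u m n). Qed.
Lemma sum_mult_l' (u : nat -> R) a m n :
  sum_n_m (fun k => a * u k) m n = a * sum_n_m u m n.
Proof. exact (sum_n_m_mult_l a u m n). Qed.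
Lemma sum_plus' (u v : nat -> R) m n :
  sum_n_m (fun k => u k + v k) m n = sum_n_m u m n + sum_n_m v m n.
Proof. exact (sum_n_m_plus u v m n). Qed.

Lemma sum_indic (j : nat) (a : R) m n : (m <= j <= n)%nat ->
  sum_n_m (fun k => if Nat.eqb j k then a else 0) m n = a.
Proof.
  revert m n. apply (sum_ind_gen (fun m n => (m <= j <= n)%nat -> _)).
  - intros; lia.
  - intros m H. rewrite sum_n_n. assert (j = m) by lia. subst. now rewrite Nat.eqb_refl.
  - intros m n Hm IH Hj. rewrite sum_n_Sm by auto.
    destruct (Nat.eq_dec j (S n)).
    + subst. rewrite Nat.eqb_refl.
      rewrite (sum_n_m_ext_loc _ (fun _ => zero)).
      rewrite sum_n_m_const_zero. apply plus_zero_l.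
      intros k Hk. destruct (Nat.eqb_spec (S n) k). lia. reflexivity.
    + rewrite IH by lia. destruct (Nat.eqb_spec j (S n)). lia. apply Rplus_0_r.
Qed.

Lemma sum_ge0 (u : nat -> R) m n : (forall k, 0 <= u k) -> 0 <= sum_n_m u m n.
Proof.
  intros H. apply Rle_trans with (sum_n_m (fun _ => 0) m n).
  right. symmetry. apply (sum_n_m_const_zero (G:=R_AbelianMonoid)). apply sum_n_m_le. exact H.
Qed.

Definition Cont (f : R -> R) := forall x, continuous f x.

Lemma Cont_sum (F : nat -> R -> R) m n : (forall i, Cont (F i)) ->
  Cont (fun t => sum_n_m (fun i => F i t) m n).
Proof.
  intros HF. revert m n. apply (sum_ind_gen (fun m n => Cont _)).
  - intros m n H x. apply continuous_ext with (f := fun _ => 0). intros t. symmetry. apply (sum_n_m_zero (fun i => F i t)); auto.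
    apply continuous_const.
  - intros m x. apply continuous_ext with (f := F m). intros t. symmetry. apply (sum_n_n (fun i => F i t)). apply HF.
  - intros m n Hm IH x. apply continuous_ext with (f := fun t => sum_n_m (fun i => F i t) m n + F (S n) t). intros t. symmetry. apply (sum_n_Sm (fun i => F i t)); auto.
    apply (continuous_plus (fun t => sum_n_m (fun i => F i t) m n) (F (S n))). apply IH. apply HF.
Qed.

Lemma Cont_plus f g : Cont f -> Cont g -> Cont (fun t => f t + g t).
Proof. intros Hf Hg x. apply (continuous_plus f g); auto. Qed.
Lemma Cont_mult f g : Cont f -> Cont g -> Cont (fun t => f t * g t).
Proof. intros Hf Hg x. apply (continuous_mult f g); auto. Qed.
Lemma Cont_const c : Cont (fun _ => c).
Proof. intros x. apply continuous_const. Qed.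
Lemma Cont_id : Cont (fun t => t).
Proof. intros x. apply continuous_id. Qed.

Lemma Cont_ex f a b : Cont f -> ex_RInt f a b.
Proof. intros H. apply (ex_RInt_continuous (V:=R_CompleteNormedModule)). intros; apply H. Qed.

Lemma RInt_plus' f g a b : Cont f -> Cont g ->
  RInt (fun t => f t + g t) a b = RInt f a b + RInt g a b.
Proof. intros. apply (RInt_plus (V:=R_CompleteNormedModule)); apply Cont_ex; auto. Qed.
Lemma RInt_scal' f a b l : Cont f ->
  RInt (fun t => l * f t) a b = l * RInt f a b.
Proof. intros. apply (RInt_scal (V:=R_CompleteNormedModule)); apply Cont_ex; auto. Qed.
Lemma RInt_minus' f g a b : Cont f -> Cont g ->
  RInt (fun t => f t - g t) a b = RInt f a b - RInt g a b.
Proof. intros. apply (RInt_minus (V:=R_CompleteNormedModule)); apply Cont_ex; auto. Qed.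

Lemma RInt_sum (F : nat -> R -> R) a b m n : (forall i, Cont (F i)) ->
  RInt (fun t => sum_n_m (fun i => F i t) m n) a b = sum_n_m (fun i => RInt (F i) a b) m n.
Proof.
  intros HF. revert m n. apply (sum_ind_gen (fun m n => _ = _)).
  - intros m n H. rewrite (sum_n_m_zero (G:=R_AbelianMonoid)) by auto.
    rewrite (RInt_ext _ (fun _ => 0)). rewrite RInt_const. change (scal (b-a) 0 = 0). unfold scal; simpl; unfold mult; simpl; ring.
    intros. apply (sum_n_m_zero (G:=R_AbelianMonoid)); auto.
  - intros m. rewrite sum_n_n. apply RInt_ext. intros x _. apply (sum_n_n (fun i => F i x)).
  - intros m n Hm IH. rewrite sum_n_Sm by auto.
    rewrite (RInt_ext _ (fun t => sum_n_m (fun i => F i t) m n + F (S n) t)).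
    rewrite RInt_plus'. rewrite IH. reflexivity. apply Cont_sum; auto. auto.
    intros x _. apply (sum_n_Sm (fun i => F i x)); auto.
Qed.

Lemma sum_ext_R (u v : nat -> R) m n : (forall k, u k = v k) -> sum_n_m u m n = sum_n_m v m n.
Proof. apply sum_n_m_ext. Qed.
Lemma sum_ext_loc_R (u v : nat -> R) m n : (forall k, (m <= k <= n)%nat -> u k = v k) ->
  sum_n_m u m n = sum_n_m v m n.
Proof. apply sum_n_m_ext_loc. Qed.
Lemma Cont_minus f g : Cont f -> Cont g -> Cont (fun t => f t - g t).
Proof. intros Hf Hg x. apply (continuous_minus f g); auto. Qed.
Lemma RInt_ext_R (f g : R -> R) a b : (forall x, f x = g x) -> RInt f a b = RInt g a b.
Proof. intros H. apply RInt_ext. intros; apply H. Qed.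
Lemma sum_le_loc (u v : nat -> R) m n : (forall k, (m <= k <= n)%nat -> u k <= v k) ->
  sum_n_m u m n <= sum_n_m v m n.
Proof.
  intros H. revert H. revert m n.
  apply (sum_ind_gen (fun m n => (forall k, (m <= k <= n)%nat -> u k <= v k) -> _)).
  - intros m n Hn _. rewrite !(sum_n_m_zero (G:=R_AbelianMonoid)) by auto. apply Rle_refl.
  - intros m H. rewrite !sum_n_n. apply H. lia.
  - intros m n Hm IH H. rewrite !sum_n_Sm by auto. apply Rplus_le_compat.
    apply IH. intros; apply H; lia. apply H; lia.
Qed.

Lemma parseval (E : nat -> R -> R) (al : nat -> R) (a b c : R) m n :
  (forall i, Cont (E i)) ->
  (forall i j, (m <= i <= n)%nat -> (m <= j <= n)%nat ->
     RInt (fun t => E i t * E j t) a b = if Nat.eqb i j then c else 0) ->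
  RInt (fun t => sum_n_m (fun i => al i * E i t) m n * sum_n_m (fun i => al i * E i t) m n) a b
  = c * sum_n_m (fun i => al i ^ 2) m n.
Proof.
  intros HE Ho.
  set (S := fun t => sum_n_m (fun i => al i * E i t) m n).
  assert (HS : Cont S). { apply Cont_sum. intros i. apply Cont_mult. apply Cont_const. apply HE. }
  rewrite (RInt_ext_R _ (fun t => sum_n_m (fun i => al i * E i t * S t) m n)).
  2:{ intros x. rewrite sum_mult_r'. reflexivity. }
  rewrite RInt_sum.
  2:{ intros i. apply Cont_mult; auto. apply Cont_mult. apply Cont_const. apply HE. }
  rewrite <- sum_mult_l'. apply sum_ext_loc_R. intros i Hi.
  rewrite (RInt_ext_R _ (fun t => sum_n_m (fun k => (al i * al k) * (E i t * E k t)) m n)).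
  2:{ intros x. unfold S. rewrite <- sum_mult_l'. apply sum_ext_R. intros k. idtac. ring. }
  rewrite RInt_sum.
  2:{ intros k. apply Cont_mult. apply Cont_const. apply Cont_mult; apply HE. }
  rewrite (sum_ext_loc_R _ (fun k => if Nat.eqb i k then al i * al i * c else 0)).
  rewrite sum_indic by auto. ring.
  intros k Hk. rewrite RInt_scal'. rewrite Ho by auto.
  destruct (Nat.eqb_spec i k). subst. ring. ring.
  apply Cont_mult; apply HE.
Qed.

Lemma bessel (E : nat -> R -> R) (h : R -> R) (a b c : R) m n :
  a <= b -> 0 < c ->
  (forall i, Cont (E i)) -> Cont h ->
  (forall i j, (m <= i <= n)%nat -> (m <= j <= n)%nat ->
     RInt (fun t => E i t * E j t) a b = if Nat.eqb i j then c else 0) ->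
  sum_n_m (fun i => (RInt (fun t => h t * E i t) a b) ^ 2) m n
  <= c * RInt (fun t => h t * h t) a b.
Proof.
  intros Hab Hc HE Hh Ho.
  set (y := fun i => RInt (fun t => h t * E i t) a b).
  set (P := fun t => sum_n_m (fun i => y i * E i t) m n).
  assert (HP : Cont P). { apply Cont_sum. intros i. apply Cont_mult. apply Cont_const. apply HE. }
  assert (Hq : Cont (fun t => h t - / c * P t)).
  { apply Cont_minus. auto. apply Cont_mult. apply Cont_const. apply HP. }
  assert (H0 : 0 <= RInt (fun t => (h t - / c * P t) * (h t - / c * P t)) a b).
  { apply RInt_ge_0; auto. apply Cont_ex. apply Cont_mult; auto.
    intros; apply Rle_0_sqr. }
  assert (HhP : RInt (fun t => h t * P t) a b = sum_n_m (fun i => y i ^ 2) m n).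
  { rewrite (RInt_ext_R _ (fun t => sum_n_m (fun i => y i * (h t * E i t)) m n)).
    2:{ intros x. unfold P. rewrite <- sum_mult_l'. apply sum_ext_R. intros; ring. }
    rewrite RInt_sum. apply sum_ext_R. intros i. rewrite RInt_scal'. unfold y. ring.
    apply Cont_mult; auto.
    intros i. apply Cont_mult. apply Cont_const. apply Cont_mult; auto. }
  assert (HPP : RInt (fun t => P t * P t) a b = c * sum_n_m (fun i => y i ^ 2) m n).
  { unfold P. apply parseval; auto. }
  rewrite (RInt_ext_R _ (fun t => (h t * h t + (-2 / c) * (h t * P t)) + (/ c * / c) * (P t * P t))) in H0.
  2:{ intros; field. lra. }
  rewrite RInt_plus', RInt_plus', RInt_scal', RInt_scal', HhP, HPP in H0.
  set (Sy := sum_n_m (fun i => y i ^ 2) m n) in *.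
  set (H := RInt (fun t => h t * h t) a b) in *.
  assert (0 <= c * H - Sy).
  { replace (c * H - Sy) with (c * (H + -2 / c * Sy + / c * / c * (c * Sy))) by (field; lra).
    apply Rmult_le_pos; lra. }
  change (Sy <= c * H). lra.
  all: repeat first [ apply Cont_plus | apply Cont_mult | apply Cont_const | apply HP | apply Hh ].
Qed.

Lemma FTC (F f : R -> R) a b : (forall t, is_derive F t (f t)) -> Cont f ->
  RInt f a b = F b - F a.
Proof.
  intros HF Hf. apply is_RInt_unique.
  apply (is_RInt_derive (V:=R_CompleteNormedModule)); intros; auto.
Qed.

Ltac cont_tac := intros ?x; apply (ex_derive_continuous (K:=R_AbsRing) (V:=R_NormedModule)); auto_derive; auto.

Definition tr (b : bool) (u t : R) := if b then cos (u * t) else sin (u * t).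

Lemma Cont_tr b u : Cont (tr b u).
Proof. destruct b; unfold tr; cont_tac. Qed.

Lemma trig_end (L u : R) (m : nat) : 0 < L -> u = INR m * (2 * PI / L) ->
  sin (u * L) = 0 /\ cos (u * L) = 1.
Proof.
  intros HL Hu. replace (u * L) with (0 + 2 * INR m * PI) by (subst; field; lra).
  rewrite sin_period, cos_period, sin_0, cos_0. auto.
Qed.

Lemma tr_orth (L : R) (m n : nat) b1 b2 : 0 < L -> (1 <= m)%nat -> (1 <= n)%nat ->
  RInt (fun t => tr b1 (INR m * (2 * PI / L)) t * tr b2 (INR n * (2 * PI / L)) t) 0 L
  = if Bool.eqb b1 b2 && Nat.eqb m n then L / 2 else 0.
Proof.
  intros HL Hm Hn.
  set (u := INR m * (2 * PI / L)). set (v := INR n * (2 * PI / L)).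
  assert (Hu : 0 < u). { unfold u. apply Rmult_lt_0_compat. apply lt_0_INR; lia.
    apply Rdiv_lt_0_compat; [|lra]. pose proof PI_RGT_0; lra. }
  assert (Hv : 0 < v). { unfold v. apply Rmult_lt_0_compat. apply lt_0_INR; lia.
    apply Rdiv_lt_0_compat; [|lra]. pose proof PI_RGT_0; lra. }
  destruct (trig_end L u m HL eq_refl) as [su cu].
  destruct (trig_end L v n HL eq_refl) as [sv cv].
  assert (Hc : Cont (fun t => tr b1 u t * tr b2 v t)) by (apply Cont_mult; apply Cont_tr).
  destruct (Nat.eqb_spec m n) as [e|ne].
  - subst n. assert (v = u) by reflexivity. clearbody u v. subst v.
    destruct b1, b2; simpl; unfold tr in *.
    + rewrite (FTC (fun t => t / 2 + sin (u * t) * cos (u * t) / (2 * u))); auto.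
      rewrite su, Rmult_0_r, sin_0. field. lra.
      intros t. auto_derive; auto. pose proof (sin2_cos2 (u * t)). unfold Rsqr in H. field_simplify; [|lra].
      replace (sin (u * t) ^ 2) with (1 - cos (u * t) ^ 2) by (simpl; lra). field. lra.
    + rewrite (FTC (fun t => sin (u * t) ^ 2 / (2 * u))); auto.
      rewrite su, Rmult_0_r, sin_0. field. lra.
      intros t. auto_derive; auto. field. lra.
    + rewrite (FTC (fun t => sin (u * t) ^ 2 / (2 * u))); auto.
      rewrite su, Rmult_0_r, sin_0. field. lra.
      intros t. auto_derive; auto. field. lra.
    + rewrite (FTC (fun t => t / 2 - sin (u * t) * cos (u * t) / (2 * u))); auto.
      rewrite su, Rmult_0_r, sin_0. field. lra.
      intros t. auto_derive; auto. pose proof (sin2_cos2 (u * t)). unfold Rsqr in H. field_simplify; [|lra].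
      replace (cos (u * t) ^ 2) with (1 - sin (u * t) ^ 2) by (simpl; lra). field. lra.
  - assert (Huv : u * u - v * v <> 0).
    { intros H. assert (u = v) by nra. apply ne. apply INR_eq.
      unfold u, v in H0. apply Rmult_eq_reg_r in H0; auto.
      apply Rgt_not_eq. apply Rdiv_lt_0_compat; [|lra]. pose proof PI_RGT_0; lra. }
    rewrite andb_false_r. clearbody u v.
    destruct b1, b2; simpl; unfold tr in *.
    + rewrite (FTC (fun t => (u * sin (u * t) * cos (v * t) - v * cos (u * t) * sin (v * t)) / (u * u - v * v))); auto.
      rewrite su, sv, !Rmult_0_r, sin_0. field. auto.
      intros t. auto_derive; auto. field. auto.
    + rewrite (FTC (fun t => (u * sin (u * t) * sin (v * t) + v * cos (u * t) * cos (v * t)) / (u * u - v * v))); auto.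
      rewrite su, sv, cu, cv, !Rmult_0_r, sin_0, cos_0. field. auto.
      intros t. auto_derive; auto. field. auto.
    + rewrite (FTC (fun t => (v * sin (v * t) * sin (u * t) + u * cos (v * t) * cos (u * t)) / (v * v - u * u))); auto.
      rewrite su, sv, cu, cv, !Rmult_0_r, sin_0, cos_0. field. lra.
      intros t. auto_derive. lra. field. lra.
    + rewrite (FTC (fun t => (v * sin (u * t) * cos (v * t) - u * cos (u * t) * sin (v * t)) / (u * u - v * v))); auto.
      rewrite su, sv, !Rmult_0_r, sin_0. field. auto.
      intros t. auto_derive; auto. field. auto.
Qed.

Lemma parity (j : nat) : (Nat.odd j = true /\ exists q, j = (2 * q + 1)%nat) \/
                         (Nat.odd j = false /\ exists q, j = (2 * q)%nat).
Proof.
  destruct (Nat.odd j) eqn:E.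
  - left. split; auto. apply Nat.odd_spec in E. destruct E as [q Hq]. exists q; lia.
  - right. split; auto. assert (Nat.even j = true) by (rewrite <- Nat.negb_odd, E; auto).
    apply Nat.even_spec in H. destruct H as [q Hq]. exists q; lia.
Qed.

Lemma beta_odd q : beta (2 * q + 1) = (q + 1)%nat.
Proof. unfold beta. replace (S (2 * q + 1)) with ((q + 1) * 2)%nat by lia. apply Nat.div_mul; lia. Qed.
Lemma beta_even q : beta (2 * q) = q.
Proof. unfold beta. replace (S (2 * q)) with (q * 2 + 1)%nat by lia. rewrite Nat.div_add_l by lia. simpl. lia. Qed.

Lemma beta_ge1 j : (1 <= j)%nat -> (1 <= beta j)%nat.
Proof. intros. destruct (parity j) as [[_ [q Hq]]|[_ [q Hq]]]; subst; [rewrite beta_odd|rewrite beta_even]; lia. Qed.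

Lemma beta_mono i j : (i <= j)%nat -> (beta i <= beta j)%nat.
Proof. intros. unfold beta. apply Nat.Div0.div_le_mono. lia. Qed.

Lemma idx_eq i j : Bool.eqb (Nat.odd i) (Nat.odd j) && Nat.eqb (beta i) (beta j) = Nat.eqb i j.
Proof.
  destruct (parity i) as [[Ei [q Hq]]|[Ei [q Hq]]]; destruct (parity j) as [[Ej [r Hr]]|[Ej [r Hr]]];
  rewrite Ei, Ej; simpl; subst; rewrite ?beta_odd, ?beta_even.
  all: repeat match goal with |- context [Nat.eqb ?a ?b] => destruct (Nat.eqb_spec a b) end.
  all: first [reflexivity | exfalso; lia].
Qed.

Definition aa R0 := / sqrt (2 * PI * R0).
Definition ww R0 p0 := 2 * PI / Lc R0 p0.
Definition ee R0 p0 k t := tr (Nat.odd k) (INR (beta k) * ww R0 p0) t.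
Definition sg (b : bool) := if b then -1 else 1.
Definition DD R0 p0 k t := sg (Nat.odd k) * tr (negb (Nat.odd k)) (INR (beta k) * ww R0 p0) t.

Lemma Lc_pos R0 p0 : 0 < R0 -> -1/2 < p0 -> 0 < Lc R0 p0.
Proof. intros. unfold Lc. pose proof PI_RGT_0.
  apply Rmult_lt_0_compat; [|lra]. apply Rmult_lt_0_compat; lra. Qed.

Lemma Thetat_eq R0 p0 k t : 0 < R0 -> -1/2 < p0 -> (1 <= k)%nat ->
  Thetat R0 p0 k t = aa R0 * ee R0 p0 k t.
Proof.
  intros H0 Hp Hk. pose proof (Lc_pos R0 p0 H0 Hp).
  unfold Thetat, Theta, ee, aa, tr, ww. destruct k. lia.
  destruct (Nat.odd (S k)); f_equal; f_equal; field; lra.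
Qed.

Lemma Thetat_D R0 p0 k t : 0 < R0 -> -1/2 < p0 -> (1 <= k)%nat ->
  Derive (Thetat R0 p0 k) t = aa R0 * INR (beta k) * ww R0 p0 * DD R0 p0 k t.
Proof.
  intros H0 Hp Hk. rewrite (Derive_ext _ (fun t => aa R0 * ee R0 p0 k t)).
  2:{ intros; apply Thetat_eq; auto. }
  apply is_derive_unique. unfold ee, DD, tr, sg.
  destruct (Nat.odd k); simpl; auto_derive; auto; ring.
Qed.

Lemma Cont_ee R0 p0 k : Cont (ee R0 p0 k).
Proof. apply Cont_tr. Qed.
Lemma Cont_DD R0 p0 k : Cont (DD R0 p0 k).
Proof. unfold DD. apply Cont_mult. apply Cont_const. apply Cont_tr. Qed.

Lemma ee_orth R0 p0 i j : 0 < R0 -> -1/2 < p0 -> (1 <= i)%nat -> (1 <= j)%nat ->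
  @eq R (RInt (fun t => ee R0 p0 i t * ee R0 p0 j t) 0 (Lc R0 p0))
  (if Nat.eqb i j then Lc R0 p0 / 2 else 0).
Proof.
  intros. unfold ee, ww. rewrite tr_orth. rewrite idx_eq. auto.
  apply Lc_pos; auto. apply beta_ge1; auto. apply beta_ge1; auto.
Qed.

Lemma DD_orth R0 p0 i j : 0 < R0 -> -1/2 < p0 -> (1 <= i)%nat -> (1 <= j)%nat ->
  @eq R (RInt (fun t => DD R0 p0 i t * DD R0 p0 j t) 0 (Lc R0 p0))
  (if Nat.eqb i j then Lc R0 p0 / 2 else 0).
Proof.
  intros. unfold DD, ww.
  rewrite (RInt_ext_R _ (fun t => (sg (Nat.odd i) * sg (Nat.odd j)) *
     (tr (negb (Nat.odd i)) (INR (beta i) * (2 * PI / Lc R0 p0)) t *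
      tr (negb (Nat.odd j)) (INR (beta j) * (2 * PI / Lc R0 p0)) t))).
  2:{ intros; ring. }
  rewrite RInt_scal'. rewrite tr_orth.
  replace (Bool.eqb (negb (Nat.odd i)) (negb (Nat.odd j))) with (Bool.eqb (Nat.odd i) (Nat.odd j))
    by (destruct (Nat.odd i), (Nat.odd j); reflexivity).
  rewrite idx_eq. destruct (Nat.eqb_spec i j). subst. unfold sg; destruct (Nat.odd j); ring. ring.
  apply Lc_pos; auto. apply beta_ge1; auto. apply beta_ge1; auto.
  apply Cont_mult; apply Cont_tr.
Qed.

Definition KK R0 p0 := aa R0 * aa R0 * Lc R0 p0 * Lc R0 p0 * ww R0 p0 / (2 * (1 + p0)).

Lemma aa_pos R0 : 0 < R0 -> 0 < aa R0.
Proof. intros. unfold aa. apply Rinv_0_lt_compat, sqrt_lt_R0.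
  pose proof PI_RGT_0. apply Rmult_lt_0_compat; lra. Qed.
Lemma ww_pos R0 p0 : 0 < R0 -> -1/2 < p0 -> 0 < ww R0 p0.
Proof. intros. unfold ww. pose proof PI_RGT_0. pose proof (Lc_pos R0 p0 H H0).
  apply Rdiv_lt_0_compat; lra. Qed.
Lemma KK_pos R0 p0 : 0 < R0 -> -1/2 < p0 -> 0 < KK R0 p0.
Proof. intros. unfold KK. pose proof (aa_pos R0 H). pose proof (ww_pos R0 p0 H H0).
  pose proof (Lc_pos R0 p0 H H0). apply Rdiv_lt_0_compat; [|lra].
  set (a := aa R0) in *. set (w := ww R0 p0) in *. set (L := Lc R0 p0) in *.
  clearbody a w L.
  assert (0 < a * a * L) by (apply Rmult_lt_0_compat; [apply Rmult_lt_0_compat|]; auto).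
  assert (0 < a * a * L * L) by (apply Rmult_lt_0_compat; auto).
  apply Rmult_lt_0_compat; auto. Qed.

Lemma UT_bound R0 p0 N1 (x : nat -> R) : 0 < R0 -> -1/2 < p0 -> (4 <= N1)%nat ->
  sum_n_m (fun i => x i ^ 2) 3 (N1 - 1) <= 1 ->
  vnorm N1 (matvec N1 (UTmat R0 p0) x) <= KK R0 p0 * INR (beta (N1 - 1)).
Proof.
  intros H0 Hp HN Hx.
  set (n := (N1 - 1)%nat) in *.
  set (L := Lc R0 p0). set (a := aa R0). set (w := ww R0 p0).
  pose proof (aa_pos R0 H0) as Ha. pose proof (ww_pos R0 p0 H0 Hp) as Hw.
  pose proof (Lc_pos R0 p0 H0 Hp) as HL. fold a w L in Ha, Hw, HL.
  set (z := fun j => x j * a * INR (beta j) * w).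
  set (g := fun t => sum_n_m (fun j => z j * DD R0 p0 j t) 3 n).
  set (h := fun t => t * g t).
  assert (Hg : Cont g). { apply Cont_sum. intros; apply Cont_mult. apply Cont_const. apply Cont_DD. }
  assert (Hh : Cont h). { apply Cont_mult. apply Cont_id. auto. }
  assert (S1 : forall i, (3 <= i <= n)%nat ->
     matvec N1 (UTmat R0 p0) x i = (a / (1 + p0)) * RInt (fun t => h t * ee R0 p0 i t) 0 L).
  { intros i Hi. unfold matvec, UTmat, Umat. fold n L.
    rewrite (sum_ext_loc_R _ (fun j => (a / (1 + p0)) * (z j * RInt (fun t => t * DD R0 p0 j t * ee R0 p0 i t) 0 L))).
    2:{ intros j Hj.
        rewrite (RInt_ext_R _ (fun t => (a * INR (beta j) * w * a) * (t * DD R0 p0 j t * ee R0 p0 i t))).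
        2:{ intros t. rewrite Thetat_D, Thetat_eq by (auto; lia). fold a w. ring. }
        rewrite RInt_scal'. unfold z. field. lra.
        apply Cont_mult. apply Cont_mult. apply Cont_id. apply Cont_DD. apply Cont_ee. }
    rewrite sum_mult_l'. f_equal.
    rewrite (RInt_ext_R _ (fun t => sum_n_m (fun j => z j * (t * DD R0 p0 j t * ee R0 p0 i t)) 3 n)).
    2:{ intros t. unfold h, g.
        rewrite (sum_ext_R (fun j => z j * (t * DD R0 p0 j t * ee R0 p0 i t)) (fun j => z j * DD R0 p0 j t * (t * ee R0 p0 i t))) by (intros; ring).
        rewrite sum_mult_r'. ring. }
    rewrite RInt_sum. apply sum_ext_R. intros j. rewrite RInt_scal'. reflexivity.
    apply Cont_mult. apply Cont_mult. apply Cont_id. apply Cont_DD. apply Cont_ee.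
    intros j. apply Cont_mult. apply Cont_const.
    apply Cont_mult. apply Cont_mult. apply Cont_id. apply Cont_DD. apply Cont_ee. }
  assert (S2 : sum_n_m (fun i => matvec N1 (UTmat R0 p0) x i ^ 2) 3 n =
     (a / (1 + p0)) ^ 2 * sum_n_m (fun i => (RInt (fun t => h t * ee R0 p0 i t) 0 L) ^ 2) 3 n).
  { rewrite <- sum_mult_l'. apply sum_ext_loc_R. intros i Hi. rewrite S1 by auto. ring. }
  assert (S3 : sum_n_m (fun i => (RInt (fun t => h t * ee R0 p0 i t) 0 L) ^ 2) 3 n
               <= L / 2 * RInt (fun t => h t * h t) 0 L).
  { apply bessel; auto. lra. lra. intros; apply Cont_ee.
    intros i j Hi Hj. apply ee_orth; auto; lia. }
  assert (S4 : RInt (fun t => h t * h t) 0 L <= L * L * RInt (fun t => g t * g t) 0 L).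
  { rewrite <- RInt_scal'. apply RInt_le. lra. apply Cont_ex. apply Cont_mult; auto.
    apply Cont_ex. apply Cont_mult. apply Cont_const. apply Cont_mult; auto.
    intros t Ht. unfold h. pose proof (Rle_0_sqr (g t)). unfold Rsqr in H.
    assert (t * t <= L * L) by nra. nra.
    apply Cont_mult; auto. }
  assert (S5 : RInt (fun t => g t * g t) 0 L = L / 2 * sum_n_m (fun j => z j ^ 2) 3 n).
  { unfold g. apply parseval. intros; apply Cont_DD.
    intros i j Hi Hj. apply DD_orth; auto; lia. }
  assert (S6 : sum_n_m (fun j => z j ^ 2) 3 n <= (a * INR (beta n) * w) ^ 2).
  { apply Rle_trans with (sum_n_m (fun j => (a * INR (beta n) * w) ^ 2 * x j ^ 2) 3 n).
    apply sum_le_loc. intros j Hj. unfold z.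
    assert (0 <= INR (beta j) <= INR (beta n)).
    { split. apply pos_INR. apply le_INR. apply beta_mono. lia. }
    assert (0 <= a * INR (beta j) * w <= a * INR (beta n) * w).
    { split. apply Rmult_le_pos; [|lra]. apply Rmult_le_pos; lra.
      apply Rmult_le_compat_r. lra. apply Rmult_le_compat_l; lra. }
    replace ((x j * a * INR (beta j) * w) ^ 2) with ((a * INR (beta j) * w) ^ 2 * x j ^ 2) by ring.
    apply Rmult_le_compat_r. apply pow2_ge_0. apply pow_incr. auto.
    rewrite sum_mult_l'. rewrite <- (Rmult_1_r ((a * INR (beta n) * w) ^ 2)) at 2.
    apply Rmult_le_compat_l. apply pow2_ge_0. auto. }
  unfold vnorm. fold n.
  assert (Hb : 0 <= KK R0 p0 * INR (beta n)).
  { apply Rmult_le_pos. apply Rlt_le, KK_pos; auto. apply pos_INR. }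
  rewrite <- (sqrt_pow2 _ Hb). apply sqrt_le_1_alt.
  rewrite S2.
  assert (0 <= RInt (fun t => g t * g t) 0 L).
  { rewrite S5. apply Rmult_le_pos. lra. apply sum_ge0. intros; apply pow2_ge_0. }
  assert (Hc : 0 <= (a / (1 + p0)) ^ 2) by apply pow2_ge_0.
  apply Rle_trans with ((a / (1 + p0)) ^ 2 * (L / 2 * (L * L * (L / 2 * (a * INR (beta n) * w) ^ 2)))).
  apply Rmult_le_compat_l; auto.
  eapply Rle_trans. apply S3. apply Rmult_le_compat_l. lra.
  eapply Rle_trans. apply S4. apply Rmult_le_compat_l. nra.
  rewrite S5. apply Rmult_le_compat_l. lra. auto.
  right. unfold KK. fold a L w. field. lra.
Qed.

Lemma D_lower N1 : (4 <= N1)%nat -> Rbar_le (Finite (INR (beta (N1 - 1)))) (opnorm N1 Dhalf).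
Proof.
  intros HN. set (n := (N1 - 1)%nat).
  destruct (Lub_Rbar_correct (fun r => exists x : nat -> R,
                       vnorm N1 x <= 1 /\ r = vnorm N1 (matvec N1 Dhalf x))) as [Hub _].
  apply Hub. exists (fun i => if Nat.eqb n i then 1 else 0). split.
  - unfold vnorm. fold n.
    rewrite (sum_ext_R _ (fun i => if Nat.eqb n i then 1 else 0)).
    rewrite sum_indic by lia. rewrite sqrt_1. lra.
    intros k. destruct (Nat.eqb n k); simpl; ring.
  - unfold vnorm. fold n.
    rewrite (sum_ext_loc_R _ (fun i => if Nat.eqb n i then INR (beta n) ^ 2 else 0)).
    rewrite sum_indic by lia. rewrite sqrt_pow2. reflexivity. apply pos_INR.
    intros i Hi. unfold matvec. fold n.
    rewrite (sum_ext_R _ (fun j => if Nat.eqb n j then (if Nat.eqb i n then INR (beta i) else 0) else 0)).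
    rewrite sum_indic by lia.
    destruct (Nat.eqb_spec i n); destruct (Nat.eqb_spec n i); subst; try lia; simpl; ring.
    intros j. unfold Dhalf.
    destruct (Nat.eqb_spec n j); destruct (Nat.eqb_spec i j); destruct (Nat.eqb_spec i n); subst; try lia; ring.
Qed.

Theorem lemma4p8 :
  forall (R0 p0 : R), 0 < R0 -> -1/2 < p0 ->
  exists C : R, 0 < C /\
    forall N1 : nat, (4 <= N1)%nat ->
      Rbar_le (opnorm N1 (UTmat R0 p0))
              (Rbar_mult (Finite C) (opnorm N1 Dhalf)).
Proof.
  intros R0 p0 H0 Hp. exists (KK R0 p0). split. apply KK_pos; auto.
  intros N1 HN.
  pose proof (KK_pos R0 p0 H0 Hp) as HK.
  assert (Hup : Rbar_le (opnorm N1 (UTmat R0 p0)) (Finite (KK R0 p0 * INR (beta (N1 - 1))))).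
  { unfold opnorm.
    destruct (Lub_Rbar_correct (fun r => exists x : nat -> R,
                       vnorm N1 x <= 1 /\ r = vnorm N1 (matvec N1 (UTmat R0 p0) x))) as [_ Hlub].
    apply Hlub. intros r [x [Hx ->]]. simpl. apply UT_bound; auto.
    unfold vnorm in Hx.
    assert (Hs : 0 <= sum_n_m (fun i => x i ^ 2) 3 (N1 - 1)) by (apply sum_ge0; intros; apply pow2_ge_0).
    pose proof (sqrt_pos (sum_n_m (fun i => x i ^ 2) 3 (N1 - 1))).
    rewrite <- (sqrt_sqrt _ Hs). nra. }
  eapply Rbar_le_trans. apply Hup.
  pose proof (D_lower N1 HN) as Hd.
  destruct (opnorm N1 Dhalf) as [d| |]; simpl in Hd |- *.
  - apply Rmult_le_compat_l; lra.
  - unfold Rbar_mult, Rbar_mult'. destruct (Rle_dec 0 (KK R0 p0)); [|lra].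
    destruct (Rle_lt_or_eq_dec 0 (KK R0 p0) r); simpl; auto. lra.
  - contradiction.
Qed.
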